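(* For every price $p>0$ and every ordering $\pi$ of $[n]$, \[ \mathbb{E}_{\mathbf v\sim\mathcal F}[\mathrm{Rev}(\mathbf v,p,\pi)]\ \ge\ p\Big(1-\prod_{i\in[n]}\big(1-\mathbb{E}_{v_i\sim\mathcal F_i}[y^*_i(v_i,p)]\big)\Big). \]
   Context: There are $n$ agents $[n]$ and one divisible item of size $1$. Each agent $i$ has a non-decreasing concave valuation $v_i:[0,1]\to\mathbb{R}_{\ge0}$ drawn independently from a known distribution $\mathcal F_i$; $\mathbf v\sim\mathcal F=\mathcal F_1\times\cdots\times\mathcal F_n$. For a price $p>0$, $y^*_i(v_i,p)\in[0,1]$ is a maximizer of $z\mapsto v_i(z)-pz$ over $[0,1]$ (fixed measurable selection). For an ordering $\pi$, with $B_\pi(i)$ the agents acting before $i$, agent $i$ buys $y_i(\mathbf v,p,\pi)=\min\{y^*_i(v_i,p),\max\{0,1-\sum_{j\in B_\pi(i)}y^*_j(v_j,p)\}\}$ in sequential posted pricing at price $p$ per unit, and $\mathrm{Rev}(\mathbf v,p,\pi)=p\sum_i y_i(\mathbf v,p,\pi)$. *)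

(* Defs.v *)
From HB Require Import structures.
From mathcomp Require Import all_boot all_order all_algebra perm.
From mathcomp Require Import all_classical all_reals all_analysis.
Set Implicit Arguments. Unset Strict Implicit. Unset Printing Implicit Defensive.
Import Order.TTheory GRing.Theory Num.Theory.
Local Open Scope classical_set_scope.
Local Open Scope ring_scope.

Section defs.
Context {R : realType}.

Definition valid_valuation (v : R -> R) : Prop :=
  [/\ (forall x y, 0 <= x -> x <= y -> y <= 1 -> v x <= v y),
      (forall x y t, 0 <= x <= 1 -> 0 <= y <= 1 -> 0 <= t <= 1 ->
          t * v x + (1 - t) * v y <= v (t * x + (1 - t) * y))
    & (forall x, 0 <= x <= 1 -> 0 <= v x)].

Definition is_demand (v : R -> R) (p y : R) : Prop :=
  0 <= y <= 1 /\ forall z, 0 <= z <= 1 -> v z - p * z <= v y - p * y.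

(* ordering pi : position k is occupied by agent pi k;
   B_pi(i) = agents acting before i *)
Definition before {n : nat} (pi : {perm 'I_n}) (j i : 'I_n) : bool :=
  ((pi^-1)%g j < (pi^-1)%g i)%N.

(* amount bought by agent i in sequential posted pricing, given the
   demands ys j = y*_j(v_j, p) *)
Definition bought {n : nat} (ys : 'I_n -> R) (pi : {perm 'I_n}) (i : 'I_n) : R :=
  Num.min (ys i) (Num.max 0 (1 - \sum_(j < n | before pi j i) ys j)).

Definition revenue {n : nat} (ys : 'I_n -> R) (p : R) (pi : {perm 'I_n}) : R :=
  p * \sum_(i < n) bought ys pi i.

End defs.

Definition mutually_independent {R : realType} {d : measure_display}
  {Omega : measurableType d} (P : probability Omega R)
  {d' : measure_display} {T : measurableType d'} {n : nat}
  (X : 'I_n -> Omega -> T) : Prop :=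
  (forall i, measurable_fun setT (X i)) /\
  forall B : 'I_n -> set T, (forall i, measurable (B i)) ->
    P (\bigcap_i (X i @^-1` B i)) = (\prod_(i < n) P (X i @^-1` B i))%E.

(* Main.v *)
Require Import Defs.
From HB Require Import structures.
From mathcomp Require Import all_boot all_order all_algebra perm.
From mathcomp Require Import all_classical all_reals all_analysis.
From mathcomp Require Import measurable_realfun.
From mathcomp Require Import lra zify.
Import Order.TTheory GRing.Theory Num.Theory.
Local Open Scope classical_set_scope.
Local Open Scope ring_scope.

Set Implicit Arguments. Unset Strict Implicit.

Section RealLemmas.
Variable R : realType.

Lemma min_step (a S : R) : 0 <= a -> 0 <= S ->
  Num.min 1 S + Num.min a (Num.max 0 (1 - S)) = Num.min 1 (S + a).
Proof.
move=> ha hS; rewrite maxEle; case: leP => h0; rewrite !minEle;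
repeat case: leP => ?; lra.
Qed.

Lemma sum_ltS n (F : 'I_n -> R) k (hk : (k < n)%N) :
  \sum_(i : 'I_n | (i < k.+1)%N) F i = \sum_(i : 'I_n | (i < k)%N) F i + F (Ordinal hk).
Proof.
rewrite (bigD1 (Ordinal hk)) //= addrC; congr (_ + _).
apply: eq_bigl => i /=.
rewrite /=.
apply/idP/idP.
- move/andP=> [h1 h2]. have h3 : (nat_of_ord i != k). by apply: contra h2 => /eqP e; apply/eqP/val_inj.
  move/eqP: h3 => h3. lia.
- move=> h; apply/andP; split; first by apply: ltnW.
  apply/negP => /eqP e. by rewrite e ltnn in h.
Qed.

Lemma prefix_sum n (a : 'I_n -> R) (ha : forall i, 0 <= a i) k : (k <= n)%N ->
  \sum_(i : 'I_n | (i < k)%N) Num.min (a i) (Num.max 0 (1 - \sum_(m : 'I_n | (m < i)%N) a m))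
  = Num.min 1 (\sum_(m : 'I_n | (m < k)%N) a m).
Proof.
elim: k => [|k IH] hk.
  rewrite big_pred0; last by move=> i; rewrite ltn0.
  rewrite big_pred0; last by move=> i; rewrite ltn0.
  by rewrite minEle ler10.
rewrite (@sum_ltS _ _ _ hk) (@sum_ltS _ a _ hk) IH; last by apply: ltnW.
rewrite /=. apply: min_step => //. by apply: sumr_ge0.
Qed.

Lemma sum_bought n (ys : 'I_n -> R) pi : (forall i, 0 <= ys i) ->
  \sum_i bought ys pi i = Num.min 1 (\sum_i ys i).
Proof.
move=> hy.
rewrite (reindex_inj (@perm_inj _ pi)) /=.
rewrite [X in _ = Num.min 1 X](reindex_inj (@perm_inj _ pi)) /=.
have -> : \sum_i bought ys pi (pi i) =
  \sum_(i : 'I_n | (i < n)%N) Num.min (ys (pi i))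
     (Num.max 0 (1 - \sum_(m : 'I_n | (m < i)%N) ys (pi m))).
  apply: eq_big => [i|i _]; first by rewrite ltn_ord.
  rewrite /bought; congr (Num.min _ (Num.max 0 (1 - _))).
  rewrite (reindex_inj (@perm_inj _ pi)) /=.
  by apply: eq_bigl => m; rewrite /before !permK.
rewrite prefix_sum //.
by congr (Num.min 1 _); apply: eq_bigl => i; rewrite ltn_ord.
Qed.

Lemma prod_ge n (y : 'I_n -> R) : (forall i, 0 <= y i <= 1) ->
  1 - \sum_i y i <= \prod_i (1 - y i).
Proof.
elim: n y => [|n IH] y hy; first by rewrite !big_ord0 subr0.
rewrite !big_ord_recr /=.
have := IH (fun i => y (widen_ord (leqnSn n) i)) (fun i => hy _).
set S := \sum_(i < n) _. set Q := \prod_(i < n) _.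
have hS : 0 <= S by apply: sumr_ge0 => i _; case/andP: (hy (widen_ord (leqnSn n) i)).
have hQ : 0 <= Q by apply: prodr_ge0 => i _; case/andP: (hy (widen_ord (leqnSn n) i)); rewrite subr_ge0.
case/andP: (hy ord_max) => h1 h2 h.
have : 0 <= (Q - (1 - S)) * (1 - y ord_max) by apply: mulr_ge0; lra.
have : 0 <= S * y ord_max by apply: mulr_ge0.
nra.
Qed.

Lemma prod_diff n (a b : 'I_n -> R) : (forall i, 0 <= b i <= a i) -> (forall i, a i <= 1) ->
  \prod_i a i <= \prod_i b i + \sum_i (a i - b i).
Proof.
elim: n a b => [|n IH] a b hb ha; first by rewrite !big_ord0 addr0.
rewrite !big_ord_recr /=.
have := IH (fun i => a (widen_ord (leqnSn n) i)) (fun i => b (widen_ord (leqnSn n) i))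
   (fun i => hb _) (fun i => ha _).
set A := \prod_(i < n) _. set B := \prod_(i < n) _. set D := \sum_(i < n) _.
have hA : 0 <= A by apply: prodr_ge0 => i _; case/andP: (hb (widen_ord (leqnSn n) i)) => ? ?; lra.
have hB : 0 <= B by apply: prodr_ge0 => i _; case/andP: (hb (widen_ord (leqnSn n) i)).
have hB1 : B <= 1.
  apply: prodr_ile1 => i _; case/andP: (hb (widen_ord (leqnSn n) i)) => ? ?.
  apply/andP; split => //. have := ha (widen_ord (leqnSn n) i). lra.
case/andP: (hb ord_max) => h1 h2. have h3 := ha ord_max.
move=> h.
have : A * a ord_max <= (B + D) * a ord_max by apply: ler_wpM2r; lra.
have : 0 <= (1 - B) * (a ord_max - b ord_max) by apply: mulr_ge0; lra.
have : 0 <= D * (1 - a ord_max).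
  apply: mulr_ge0; last lra.
  rewrite /D; apply: sumr_ge0 => i _; case/andP: (hb (widen_ord (leqnSn n) i)) => ? ?; lra.
nra.
Qed.

Lemma count_sum (K t : nat) : \sum_(j < K) ((j < t)%N)%:R = (minn t K)%:R :> R.
Proof.
elim: K => [|K IH]; first by rewrite big_ord0 minn0.
rewrite big_ord_recr /= IH -natrD; congr (_%:R).
case: (ltnP K t) => h /=; lia.
Qed.

Definition b2r (b : bool) : R := b%:R.

Lemma disc_bound (K : nat) (z : R) : (0 < K)%N -> 0 <= z <= 1 ->
  0 <= K%:R^-1 * \sum_(j < K) b2r ((j.+1)%:R / K%:R <= z) /\
  K%:R^-1 * \sum_(j < K) b2r ((j.+1)%:R / K%:R <= z) <= z /\
  z <= K%:R^-1 * \sum_(j < K) b2r ((j.+1)%:R / K%:R <= z) + K%:R^-1.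
Proof.
move=> hK /andP[z0 z1].
have hk : 0 < K%:R :> R by rewrite ltr0n.
set k := K%:R : R.
have x0 : 0 <= k * z by apply: mulr_ge0 => //; apply: ltW.
set x := k * z.
set t := Num.Def.trunc x.
have ht : forall j : 'I_K, ((j.+1)%:R / k <= z) = (j < t)%N.
  move=> j; rewrite ler_pdivrMr // [z * k]mulrC -/x.
  by rewrite /t truncn_ge_nat.
have tK : (t <= K)%N.
  rewrite /t truncn_le_nat /x. 
  have : k * z <= k by rewrite -{2}[k]mulr1; apply: ler_wpM2l => //; apply: ltW.
  rewrite /k -natr1; lra.
have hs : k^-1 * \sum_(j < K) b2r ((j.+1)%:R / k <= z) = k^-1 * t%:R.
  congr (_ * _); under eq_bigr do rewrite ht.
  rewrite /b2r.
  by rewrite count_sum (minn_idPl tK).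
rewrite hs.
have h1 : t%:R <= x by rewrite /t truncn_le.
have h2 : x < t.+1%:R by rewrite /t truncnS_gt.
have hz : z = k^-1 * x by rewrite /x mulKf // gt_eqF.
have hki : 0 <= k^-1 by rewrite invr_ge0; apply: ltW.
split; first by apply: mulr_ge0.
split.
  by rewrite [X in _ <= X]hz; apply: ler_wpM2l.
rewrite [X in X <= _]hz -[X in _ + X]mulr1 -mulrDr.
apply: ler_wpM2l => //. rewrite -natr1 in h2. lra.
Qed.

End RealLemmas.

Section Prob.
Variables (R : realType) (d : measure_display) (Omega : measurableType d) (P : probability Omega R).

Definition Ef (f : Omega -> R) : R := fine (\int[P]_w (f w)%:E).

Lemma int_le_cst (f : Omega -> R) M : measurable_fun setT f -> (forall w, 0 <= f w <= M) ->
  (0 <= \int[P]_w (f w)%:E <= M%:E)%E.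
Proof.
move=> mf hf; apply/andP; split.
  by apply: integral_ge0 => w _; rewrite lee_fin; case/andP: (hf w).
have hM : 0 <= M by case/andP: (hf point) => ? ?; lra.
apply: (@le_trans _ _ (\int[P]_w (cst M%:E) w)%E).
  apply: ge0_le_integral => //.
  - by move=> w _; rewrite lee_fin; case/andP: (hf w).
  - by apply/measurable_EFinP.
  - by move=> w _; rewrite lee_fin; case/andP: (hf w).
rewrite integral_cst //.
have h1 := probability_setT P. set z := (X in (_ * X)%E). have -> : z = 1%E by exact: h1.
by rewrite mule1.
Qed.

Lemma EfE (f : Omega -> R) M : measurable_fun setT f -> (forall w, 0 <= f w <= M) ->
  (\int[P]_w (f w)%:E = (Ef f)%:E)%E.
Proof.
move=> mf hf; rewrite /Ef fineK //.
case/andP: (int_le_cst mf hf) => h1 h2.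
rewrite ge0_fin_numE //. by apply: (le_lt_trans h2); rewrite ltry.
Qed.

Lemma Ef_bnd (f : Omega -> R) M : measurable_fun setT f -> (forall w, 0 <= f w <= M) ->
  0 <= Ef f <= M.
Proof.
move=> mf hf; have := int_le_cst mf hf. by rewrite (EfE mf hf) !lee_fin.
Qed.

Lemma Ef_le (f g : Omega -> R) M : measurable_fun setT f -> measurable_fun setT g ->
  (forall w, 0 <= f w) -> (forall w, f w <= g w) -> (forall w, g w <= M) ->
  Ef f <= Ef g.
Proof.
move=> mf mg hf hfg hg.
have hf' : forall w, 0 <= f w <= M by move=> w; rewrite hf /=; apply: (le_trans (hfg w)).
have hg' : forall w, 0 <= g w <= M by move=> w; rewrite hg andbT; apply: (le_trans (hf w)).
rewrite -lee_fin -(EfE mf hf') -(EfE mg hg').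
apply: ge0_le_integral => //.
- by move=> w _; rewrite lee_fin.
- by apply/measurable_EFinP.
- by apply/measurable_EFinP.
- by move=> w _; rewrite lee_fin.
Qed.

Lemma Ef_add (f g : Omega -> R) M : measurable_fun setT f -> measurable_fun setT g ->
  (forall w, 0 <= f w <= M) -> (forall w, 0 <= g w <= M) ->
  Ef (fun w => f w + g w) = Ef f + Ef g.
Proof.
move=> mf mg hf hg.
have mfg : measurable_fun setT (fun w => f w + g w) by apply: measurable_funD.
have hfg : forall w, 0 <= f w + g w <= M + M.
  by move=> w; case/andP: (hf w) => ? ?; case/andP: (hg w) => ? ?; apply/andP; split; lra.
apply: EFin_inj. rewrite -(EfE mfg hfg) EFinD -(EfE mf hf) -(EfE mg hg).
under eq_integral do rewrite EFinD.
apply: ge0_integralD => //.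
- by move=> w _; rewrite lee_fin; case/andP: (hf w).
- by apply/measurable_EFinP.
- by move=> w _; rewrite lee_fin; case/andP: (hg w).
- by apply/measurable_EFinP.
Qed.

Lemma Ef_scale (f : Omega -> R) c M : 0 <= c -> measurable_fun setT f ->
  (forall w, 0 <= f w <= M) -> Ef (fun w => c * f w) = c * Ef f.
Proof.
move=> hc mf hf.
have mcf : measurable_fun setT (fun w => c * f w) by apply: measurable_funM.
have hcf : forall w, 0 <= c * f w <= c * M.
  move=> w; case/andP: (hf w) => ? ?; apply/andP; split; first by apply: mulr_ge0.
  by apply: ler_wpM2l.
apply: EFin_inj. rewrite -(EfE mcf hcf) EFinM -(EfE mf hf).
under eq_integral do rewrite EFinM.
apply: ge0_integralZl => //.
- by apply/measurable_EFinP.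
- by move=> w _; rewrite lee_fin; case/andP: (hf w).
Qed.

Lemma Ef_cst c : 0 <= c -> Ef (fun _ => c) = c.
Proof.
move=> hc; rewrite /Ef. 
have -> : (\int[P]_w (c%:E))%E = (\int[P]_w (cst c%:E) w)%E by [].
rewrite integral_cst //.
have h1 := probability_setT P. set z := (X in (_ * X)%E). have -> : z = 1%E by exact: h1.
by rewrite mule1.
Qed.

Lemma Ef_indic_sum (I : finType) (E : I -> set Omega) (c : R) : 0 <= c ->
  (forall j, measurable (E j)) ->
  Ef (fun w => c * \sum_j \1_(E j) w) = c * \sum_j fine (P (E j)).
Proof.
move=> hc hE.
have hb : forall w, 0 <= (\sum_j \1_(E j) w : R) <= #|I|%:R.
  move=> w; apply/andP; split; first by apply: sumr_ge0 => j _; rewrite indicE.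
  rewrite -sum1_card natr_sum; apply: ler_sum => j _; rewrite indicE; case: (_ \in _) => //.
have mS : measurable_fun setT (fun w => \sum_j \1_(E j) w :> R).
  by apply: measurable_sum => j; apply: measurable_indic.
rewrite (Ef_scale hc mS hb); congr (_ * _).
rewrite /Ef.
under eq_integral do rewrite -sumEFin.
rewrite ge0_integral_sum //; try (by move=> j; apply/measurable_EFinP; apply: measurable_indic);
  try (by move=> j w _; rewrite lee_fin indicE).
under eq_bigr do rewrite integral_indic // setIT.
rewrite (eq_bigr (fun j => (fine (P (E j)))%:E)); last first.
  by move=> j _; rewrite fineK //; apply: fin_num_measure.
by rewrite sumEFin.
Qed.

Lemma prod_indic n K (A : 'I_n -> 'I_K -> set Omega) (f : {ffun 'I_n -> 'I_K}) w :
  \prod_i \1_(A i (f i)) w = \1_(\bigcap_i A i (f i)) w :> R.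
Proof.
rewrite [RHS]indicE.
case: (boolP (w \in \bigcap_i A i (f i))) => h.
  apply: big1 => i _; rewrite indicE mem_set //.
  by move: h; rewrite in_setE => /(_ i I).
move/negP: h; rewrite in_setE => /existsNP [i hi].
rewrite (bigD1 i) //= indicE memNset ?mul0r //.
Qed.

Lemma Ef_indep n K (A : 'I_n -> 'I_K -> set Omega) c : 0 <= c ->
  (forall i j, measurable (A i j)) ->
  (forall f : 'I_n -> 'I_K, P (\bigcap_i A i (f i)) = (\prod_i P (A i (f i)))%E) ->
  Ef (fun w => \prod_i (c * \sum_(j < K) \1_(A i j) w)) =
  \prod_i Ef (fun w => c * \sum_(j < K) \1_(A i j) w).
Proof.
move=> hc hA hind.
under [RHS]eq_bigr do rewrite Ef_indic_sum //.
have -> : (fun w => \prod_i (c * \sum_(j < K) \1_(A i j) w)) =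
   (fun w => c ^+ n * \sum_(f : {ffun 'I_n -> 'I_K}) \1_(\bigcap_i A i (f i)) w).
  apply: funext => w; rewrite big_split /= prodr_const card_ord; congr (_ * _).
  rewrite bigA_distr_bigA /=; apply: eq_bigr => f _; exact: prod_indic.
rewrite Ef_indic_sum //; last first.
  move=> f; apply: fin_bigcap_measurable; [exact: (@finite_finset _ setT)| by move=> i _].
  by apply: exprn_ge0.
rewrite big_split /= prodr_const card_ord; congr (_ * _).
rewrite bigA_distr_bigA /=; apply: eq_bigr => f _.
rewrite hind.
rewrite (eq_bigr (fun i => (fine (P (A i (f i))))%:E)); last first.
  by move=> i _; rewrite fineK //; apply: fin_num_measure.
by rewrite prodEFin.
Qed.

End Prob.

Unset Implicit Arguments. Set Strict Implicit.

Theorem mainTheorem7 (R : realType) (d : measure_display)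
  (Omega : measurableType d) (P : probability Omega R)
  (dV : measure_display) (V : measurableType dV) (val : V -> R -> R)
  (n : nat) (X : 'I_n -> Omega -> V)
  (p : R) (ystar : 'I_n -> (R -> R) -> R) (pi : {perm 'I_n}) :
  0 < p ->
  mutually_independent P X ->
  (forall i w, valid_valuation (val (X i w))) ->
  (forall i, measurable_fun setT (fun t : V => ystar i (val t))) ->
  (forall i w, is_demand (val (X i w)) p (ystar i (val (X i w)))) ->
  (\int[P]_w (revenue (fun i => ystar i (val (X i w))) p pi)%:E
     >= p%:E * (1 - \prod_(i < n)
                      (1 - \int[P]_w (ystar i (val (X i w)))%:E)))%E.
Proof.
move=> hp [mX hind] _ hm hdem.
pose Y i w := ystar i (val (X i w)).
have hY : forall i w, 0 <= Y i w <= 1 by move=> i w; case: (hdem i w).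
have mY : forall i, measurable_fun setT (Y i).
  by move=> i; exact: (measurableT_comp (hm i) (mX i)).
pose Z i w := 1 - Y i w.
have hZ : forall i w, 0 <= Z i w <= 1.
  by move=> i w; case/andP: (hY i w) => ? ?; apply/andP; split; rewrite /Z; lra.
have mZ : forall i, measurable_fun setT (Z i).
  by move=> i; apply: measurable_funB => //; exact: mY.
have hZY : forall i, Ef P (Z i) = 1 - Ef P (Y i).
  move=> i; have := Ef_add P (mZ i) (mY i) (hZ i) (hY i).
  have -> : (fun w => Z i w + Y i w) = (fun _ => 1) by apply: funext => w; rewrite /Z subrK.
  rewrite Ef_cst // => h; lra.
pose Zp w := \prod_i Z i w.
have hZp : forall w, 0 <= Zp w <= 1.
  move=> w; apply/andP; split.
    by apply: prodr_ge0 => i _; case/andP: (hZ i w).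
  by apply: prodr_ile1 => i _; exact: hZ.
have mZp : measurable_fun setT Zp by apply: measurable_prod => i _; exact: mZ.
have key : Ef P Zp <= \prod_i Ef P (Z i).
  apply/ler_addgt0Pr => e he.
  pose K := (Num.Def.trunc (n%:R / e)).+1.
  have hK : (0 < K)%N by [].
  pose kk := K%:R : R.
  have hkk : 0 < kk by rewrite ltr0n.
  have hne : n%:R * kk^-1 <= e.
    have h : n%:R / e < kk := truncnS_gt _.
    rewrite ltr_pdivrMr // in h.
    rewrite ler_pdivrMr // mulrC; exact: ltW.
  pose g i v := 1 - ystar i (val v).
  have mg : forall i, measurable_fun setT (g i) by move=> i; apply: measurable_funB.
  pose B i (j : 'I_K) := g i @^-1` [set` `[(j.+1)%:R / kk, +oo[].
  have mB : forall i j, measurable (B i j).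
    by move=> i j; rewrite -[B i j]setTI; apply: (mg i) => //; exact: measurable_itv.
  pose A i j := X i @^-1` B i j.
  have mA : forall i j, measurable (A i j).
    by move=> i j; rewrite -[A i j]setTI; apply: (mX i) => //; exact: mB.
  have hindA : forall f : 'I_n -> 'I_K,
      P (\bigcap_i A i (f i)) = (\prod_i P (A i (f i)))%E.
    by move=> f; exact: (hind (fun i => B i (f i)) (fun i => mB i (f i))).
  pose s i w := kk^-1 * \sum_(j < K) \1_(A i j) w.
  have hs : forall i w, s i w = kk^-1 * \sum_(j < K) @b2r R ((j.+1)%:R / kk <= Z i w).
    move=> i w; congr (_ * _); apply: eq_bigr => j _; rewrite indicE /b2r; congr (_%:R).
    congr (nat_of_bool _). apply/idP/idP.
      by rewrite in_setE /A /B /= in_itv /= andbT.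
    by move=> h; rewrite in_setE /A /B /= in_itv /= andbT.
  have hbnd : forall i w, 0 <= s i w /\ s i w <= Z i w /\ Z i w <= s i w + kk^-1.
    by move=> i w; rewrite hs; exact: disc_bound.
  have ms : forall i, measurable_fun setT (s i).
    move=> i; apply: measurable_funM => //; apply: measurable_sum => j.
    exact: measurable_indic.
  pose sp w := \prod_i s i w.
  have msp : measurable_fun setT sp by apply: measurable_prod => i _; exact: ms.
  have hsp : forall w, 0 <= sp w <= 1.
    move=> w; apply/andP; split.
      by apply: prodr_ge0 => i _; case: (hbnd i w).
    apply: prodr_ile1 => i _; case: (hbnd i w) => h1 [h2 h3].
    case/andP: (hZ i w) => ? ?; apply/andP; split; lra.
  have hc0 : 0 <= n%:R * kk^-1 by apply: mulr_ge0 => //; rewrite invr_ge0 ltW.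
  have step1 : Ef P Zp <= Ef P (fun w => sp w + n%:R * kk^-1).
    apply: (@Ef_le _ _ _ P _ _ (1 + n%:R * kk^-1)).
    - exact: mZp.
    - by apply: measurable_funD.
    - by move=> w; case/andP: (hZp w).
    - move=> w.
      have h := @prod_diff _ n (fun i => Z i w) (fun i => s i w).
      apply: le_trans; first apply: h.
      + by move=> i; case: (hbnd i w) => h1 [h2 h3]; rewrite h1 h2.
      + by move=> i; case/andP: (hZ i w).
      rewrite lerD2l.
      have -> : n%:R * kk^-1 = \sum_(i < n) kk^-1.
        by rewrite sumr_const card_ord mulr_natl.
      apply: ler_sum => i _; case: (hbnd i w) => h1 [h2 h3]; lra.
    - by move=> w; rewrite lerD2r; case/andP: (hsp w).
  have step2 : Ef P (fun w => sp w + n%:R * kk^-1) = Ef P sp + n%:R * kk^-1.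
    rewrite (@Ef_add _ _ _ P sp (fun _ => n%:R * kk^-1) (1 + n%:R * kk^-1)) //.
    - by rewrite Ef_cst.
    - by move=> w; case/andP: (hsp w) => ? ?; apply/andP; split; lra.
    - by move=> w; apply/andP; split; lra.
  have step3 : Ef P sp = \prod_i Ef P (s i).
    rewrite /sp /s; apply: Ef_indep => //; by rewrite invr_ge0 ltW.
  have step4 : \prod_i Ef P (s i) <= \prod_i Ef P (Z i).
    apply: ler_prod => i _; apply/andP; split.
      have hsb : forall w, 0 <= s i w <= 1.
        by move=> w; case: (hbnd i w) => h1 [h2 h3]; case/andP: (hZ i w) => ? ?; rewrite h1 /=; lra.
      by case/andP: (Ef_bnd P (ms i) hsb).
    apply: (@Ef_le _ _ _ P _ _ 1) => //.
    - by move=> w; case: (hbnd i w).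
    - by move=> w; case: (hbnd i w) => h1 [h2 h3].
    - by move=> w; case/andP: (hZ i w).
  apply: le_trans step1 _; rewrite step2 step3.
  by apply: lerD.
pose rv w := p * Num.min 1 (\sum_i Y i w).
have hrev : forall w, revenue (fun i => ystar i (val (X i w))) p pi = rv w.
  by move=> w; rewrite /revenue sum_bought // => i; case/andP: (hY i w).
have mrv : measurable_fun setT rv.
  apply: measurable_funM => //; apply: measurable_minr => //.
  by apply: measurable_sum => i; exact: mY.
have hrv : forall w, 0 <= rv w <= p.
  move=> w; have hS : 0 <= \sum_i Y i w by apply: sumr_ge0 => i _; case/andP: (hY i w).
  apply/andP; split.
    apply: mulr_ge0; first exact: ltW.
    by rewrite le_min ler01 hS.
  rewrite -[X in _ <= X]mulr1; apply: ler_wpM2l; first exact: ltW.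
  by rewrite ge_min lexx.
rewrite (eq_integral (fun w => (rv w)%:E)); last by move=> w _; rewrite hrev.
rewrite (EfE P mrv hrv).
rewrite (eq_bigr (fun i => (1 - Ef P (Y i))%:E)); last first.
  by move=> i _; rewrite EFinB; congr (_ - _)%E; exact: (EfE P (mY i) (hY i)).
rewrite prodEFin -EFinB -EFinM lee_fin.
under eq_bigr do rewrite -hZY.
have m1Zp : measurable_fun setT (fun w => 1 - Zp w) by apply: measurable_funB.
have h1Zp : forall w, 0 <= 1 - Zp w <= 1.
  by move=> w; case/andP: (hZp w) => ? ?; apply/andP; split; lra.
have E1Zp : Ef P (fun w => 1 - Zp w) = 1 - Ef P Zp.
  have := Ef_add P m1Zp mZp h1Zp hZp.
  have -> : (fun w => 1 - Zp w + Zp w) = (fun _ => 1) by apply: funext => w; rewrite subrK.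
  rewrite Ef_cst // => h; lra.
apply: (@le_trans _ _ (p * (1 - Ef P Zp))).
  by apply: ler_wpM2l; [exact: ltW | lra].
rewrite -E1Zp -(Ef_scale P (ltW hp) m1Zp h1Zp).
apply: (@Ef_le _ _ _ P _ _ p).
- by apply: measurable_funM.
- exact: mrv.
- by move=> w; apply: mulr_ge0; [exact: ltW | case/andP: (h1Zp w)].
- move=> w; apply: ler_wpM2l; first exact: ltW.
  rewrite le_min; apply/andP; split; first by case/andP: (hZp w) => ? ?; lra.
  have := prod_ge (fun i => hY i w). rewrite /Zp /Z. lra.
- by move=> w; case/andP: (hrv w).
Qed.
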